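(* Let $\Delta$ be an ordinary subgraph of $T$ and let $\varepsilon$ be the minimal integer direction vector of an edge (one-dimensional face) of the cone $C_\Delta$. Then there exist two ordinary subgraphs $\Delta_1,\Delta_2$ of $T$ with disjoint node sets whose union is the node set of $\Delta$, with the top node $(i_\Delta,j_\Delta)$ belonging to $\Delta_1$, such that $\varepsilon_{i,j}=0$ for all nodes $(i,j)$ of $\Delta_1$, and $\varepsilon_{i,j}=c$ for all nodes $(i,j)$ of $\Delta_2$, for a single constant $c\in\{1,-1\}$.
   Context: Fix $n\ge 1$. Let $T$ be the graph with node set $\{(i,j):0\le i\le n-1,\ 1\le j\le n-i\}$ (''row $i$'' consists of the nodes $(i,\cdot)$) in which, for every $1\le i\le n-1$, $1\le j\le n-i$, the node $(i,j)$ is adjacent to $(i-1,j)$ and to $(i-1,j+1)$, and there are no other edges. A subgraph $\Delta\subset T$ is ordinary if it is connected, induced, and whenever it contains both $(i,j)$ and $(i,j+1)$ it also contains $(i-1,j+1)$ and $(i+1,j)$. For ordinary $\Delta$ the smallest-index row meeting $\Delta$ contains exactly one node of $\Delta$, the top node $(i_\Delta,j_\Delta)$. In $\mathbb R^{n(n+1)/2}$ with coordinates $x_{i,j}$ indexed by nodes of $T$, $C_\Delta$ is the set of $x$ with: $x_{i,j}=0$ for $(i,j)\notin\Delta$; $x_{i_\Delta,j_\Delta}=0$; $x_{i-1,j}\ge x_{i,j}$ for every edge of $\Delta$ joining $(i,j)$ and $(i-1,j)$; $x_{i,j}\ge x_{i-1,j+1}$ for every edge of $\Delta$ joining $(i,j)$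 and $(i-1,j+1)$. *)

(* Defs.v *)
From HB Require Import structures.
From mathcomp Require Import all_boot all_order all_algebra.
Set Implicit Arguments. Unset Strict Implicit. Unset Printing Implicit Defensive.
Import Order.TTheory GRing.Theory Num.Theory.
Local Open Scope ring_scope.

Definition node (n : nat) :=
  {p : 'I_n * 'I_n.+1 | (1 <= p.2 <= n - p.1)%N}.

Definition row {n} (u : node n) : nat := (val u).1.
Definition col {n} (u : node n) : nat := (val u).2.

(* Edges of T: (i,j) -- (i-1,j) and (i,j) -- (i-1,j+1), i >= 1. *)
Definition adjT {n} (u v : node n) : bool :=
  ((row u == (row v).+1) && ((col v == col u) || (col v == (col u).+1)))
  || ((row v == (row u).+1) && ((col u == col v) || (col u == (col v).+1))).

Definition inD {n} (D : {set node n}) (i j : nat) : bool :=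
  [exists u in D, (row u == i) && (col u == j)].

Definition connectedD {n} (D : {set node n}) : Prop :=
  D != set0 /\
  forall u v, u \in D -> v \in D ->
    connect [rel x y | [&& x \in D, y \in D & adjT x y]] u v.

(* ordinary subgraph (induced subgraphs are identified with their node sets) *)
Definition ordinary {n} (D : {set node n}) : Prop :=
  connectedD D /\
  forall u v, u \in D -> v \in D -> row v = row u -> col v = (col u).+1 ->
    [/\ (0 < row u)%N, inD D (row u).-1 (col u).+1 & inD D (row u).+1 (col u)].

Definition is_top {n} (D : {set node n}) (t : node n) : Prop :=
  t \in D /\ forall u, u \in D -> (row t <= row u)%N.

Definition coneC {R : realFieldType} {n} (D : {set node n}) (x : node n -> R)
  : Prop :=
  [/\ (forall u, u \notin D -> x u = 0),
      (forall t, is_top D t -> x t = 0),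
      (forall u v, u \in D -> v \in D -> row u = (row v).+1 -> col v = col u ->
          x u <= x v)
    &
      (forall u v, u \in D -> v \in D -> row u = (row v).+1 ->
          col v = (col u).+1 -> x v <= x u)].

Definition is_face {R : realFieldType} {n} (C F : (node n -> R) -> Prop)
  : Prop :=
  exists a : node n -> R,
    (forall x, C x -> 0 <= \sum_u a u * x u) /\
    (forall x, F x <-> (C x /\ \sum_u a u * x u = 0)).

Definition primitive {n} (eps : node n -> int) : Prop :=
  forall d : nat, (forall u, (d%:Z %| eps u)%Z) -> d = 1%N.

(* eps is the minimal integer direction vector of an edge (a 1-dimensional
   face) of the cone C_D: there is a face F of C_D whose linear span is the
   line R*eps, with eps in F, and eps is primitive. *)
Definition edge_direction (R : realFieldType) {n} (D : {set node n})
  (eps : node n -> int) : Prop :=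
  primitive eps /\
  exists F : (node n -> R) -> Prop,
    [/\ is_face (coneC D) F,
        F (fun u => (eps u)%:~R)
      & forall x, F x -> exists t : R, forall u, x u = t * (eps u)%:~R].

(* Main.v *)
Require Import Defs.
From HB Require Import structures.
From mathcomp Require Import all_boot all_order all_algebra.
From mathcomp Require Import zify ring lra.
Import Order.TTheory GRing.Theory Num.Theory.
Require Import Defs.

Lemma node_eqP n (u v : node n) : row u = row v -> col u = col v -> u = v.
Proof.
case: u v => [[a b] Hu] [[c d] Hv]; rewrite /row /col /= => Hac Hbd.
apply: val_inj => /=; congr pair; exact: val_inj.
Qed.

Lemma adjT_sym n (u v : node n) : adjT u v = adjT v u.
Proof. by rewrite /adjT orbC. Qed.

Lemma adj_rows n (u v : node n) : adjT u v -> row u = (row v).+1 \/ row v = (row u).+1.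
Proof. by rewrite /adjT => /orP [/andP [/eqP -> _]|/andP [/eqP -> _]]; [left|right]. Qed.

Lemma adj_down n (u v : node n) : row u = (row v).+1 ->
  (col v = col u \/ col v = (col u).+1) -> adjT u v.
Proof. by move=> Hr Hc; rewrite /adjT Hr eqxx /=; case: Hc => ->; rewrite eqxx ?orbT. Qed.

Lemma adj_cols n (u v : node n) : adjT u v -> row u = (row v).+1 ->
  (col v = col u \/ col v = (col u).+1).
Proof.
rewrite /adjT => /orP [/andP [_ /orP [/eqP ->|/eqP ->]]|/andP [/eqP ->]] //; try by [left|right].
lia.
Qed.

Arguments node_eqP {n u v}.
Arguments adjT_sym {n}.
Arguments adj_rows {n u v}.
Arguments adj_down {n u v}.
Arguments adj_cols {n u v}.

Lemma peak {n} (e : rel (node n)) (He : forall x y, e x y -> adjT x y) x s :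
  path e x s -> (row x < row (head x s))%N -> (row (last x s) <= row x)%N ->
  exists s1 b c s2, s = s1 ++ [:: b, c & s2] /\ (row (last x s1)).+1 = row b
     /\ (row c).+1 = row b.
Proof.
elim: s x => [|y s IH] x /=; first by rewrite ltnn.
case/andP=> exy pys lt_xy le_last.
case: s IH pys le_last => [|z s] IH pys le_last.
  by move: le_last; rewrite /= leqNgt lt_xy.
move: (pys) => /= /andP[eyz _].
have Hxy : row y = (row x).+1.
  by case: (adj_rows (He _ _ exy)) => H; rewrite H in lt_xy *; lia.
case: (adj_rows (He _ _ eyz)) => Hyz.
  by exists [::], y, z, s; split=> //; split.
case: (IH y pys); [by rewrite /= Hyz | by move: le_last => /=; lia |].
move=> s1 [b [c [s2 [Hs [H1 H2]]]]].
by exists (y :: s1), b, c, s2; rewrite Hs.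
Qed.

Section Top.
Variables (n : nat) (D : {set node n}) (hD : ordinary D) (m : nat)
  (hm : forall u, u \in D -> (m <= row u)%N).

Let e := [rel x y | [&& x \in D, y \in D & adjT x y]].

Lemma no_two_mins k : forall s x, (sumn [seq (row v).+1 | v <- s] <= k)%N ->
  path e x s -> row x = m -> row (last x s) = m -> last x s != x -> False.
Proof.
elim: k => [|k IH] s x.
  by case: s => [|v s] /=; [rewrite eqxx | lia].
move=> Hk Hp Hx Hl Hne.
have He : forall a b, e a b -> adjT a b by move=> a b /and3P [].
case: s Hk Hp Hl Hne => [|y s'] Hk Hp Hl Hne; first by rewrite eqxx in Hne.
have lt1 : (row x < row (head x (y :: s')))%N.
  move: (Hp) => /= /andP [/and3P [_ yD axy] _].
  have := hm _ yD; case: (adj_rows axy); lia.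
have [|s1 [b [c [s2 [Hs [Ha Hc]]]]]] := @peak n e He x (y :: s') Hp lt1; first by rewrite Hl Hx.
rewrite Hs in Hk Hp Hl Hne; clear Hs lt1 y s'.
move: Hp; rewrite cat_path => /andP [p1 /= /andP [eab /andP [ebc p2]]].
set a := last x s1 in Ha eab.
have Hlast : last x (s1 ++ [:: b, c & s2]) = last c s2 by rewrite last_cat.
rewrite Hlast in Hl Hne.
move: Hk; rewrite map_cat sumn_cat /= => Hk.
case: (eqVneq a c) => [Eac | Nac].
  apply: (IH (s1 ++ s2) x); rewrite ?last_cat -/a ?Eac //.
    by rewrite map_cat sumn_cat; move: Hk; clear; lia.
  by rewrite cat_path p1 -/a Eac.
move: eab ebc => /and3P [aD bD aab] /and3P [_ cD abc].
rewrite adjT_sym in aab.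
have ca := adj_cols aab (esym Ha); have cc := adj_cols abc (esym Hc).
have key : forall u v, u \in D -> v \in D -> row v = row u -> col v = (col u).+1 ->
   (row u).+1 = row b -> exists2 w, e u w & e w v /\ (row w).+2 = row b.
  move=> u v uD vD Hr Hcol Hb.
  have [H0 /existsP [w /andP [wD /andP [/eqP wr /eqP wc]]] _] := hD.2 u v uD vD Hr Hcol.
  exists w.
    by rewrite /= uD wD /=; apply: adj_down; [rewrite wr prednK | right].
  split; last by rewrite wr -Hb prednK.
  rewrite /= wD vD /= adjT_sym; apply: adj_down; [by rewrite wr Hr prednK | by left; rewrite wc Hcol].
have [w ew1 [ew2 Hw]] : exists2 w, e a w & e w c /\ (row w).+2 = row b.
  have Hrac : row c = row a by apply: succn_inj; rewrite Hc Ha.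
  have : col c = (col a).+1 \/ col a = (col c).+1.
    have Hne2 : col a != col c.
      by apply/eqP => E; move/eqP: Nac; apply; apply: node_eqP.
    case: ca => ha; case: cc => hc.
    - by rewrite ha hc eqxx in Hne2.
    - by left; rewrite ha hc.
    - by right; rewrite ha hc.
    - by rewrite ha hc eqxx in Hne2.
  case=> Hcol.
    exact: key a c aD cD Hrac Hcol Ha.
  have [w H1 [H2 H3]] := key c a cD aD (esym Hrac) Hcol Hc.
  exists w; last split=> //.
    by move: H2 => /= /and3P [-> -> /=]; rewrite adjT_sym.
  by move: H1 => /= /and3P [-> -> /=]; rewrite adjT_sym.
apply: (IH (s1 ++ [:: w, c & s2]) x); rewrite ?last_cat -/a //.
  by rewrite map_cat sumn_cat /=; move: Hk Hw; clear; lia.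
rewrite cat_path p1 -/a /=; apply/andP; split; first exact: ew1.
by apply/andP; split; [exact: ew2 | exact: p2].
Qed.

End Top.

Lemma top_unique n (D : {set node n}) (hD : ordinary D) t1 t2 :
  is_top D t1 -> is_top D t2 -> t1 = t2.
Proof.
move=> [t1D h1] [t2D h2].
have := (hD.1).2 t1 t2 t1D t2D.
case/connectP => s Hp Hl.
case: (eqVneq t1 t2) => // Hne.
exfalso; apply: (@no_two_mins n D hD (row t1) h1 _ s t1 (leqnn _) Hp erefl).
  by rewrite -Hl; have := h1 _ t2D; have := h2 _ t1D; lia.
by rewrite -Hl eq_sym.
Qed.

Arguments top_unique {n D} hD {t1 t2}.

Lemma connect_mono (T : finType) (e e' : rel T) (P : pred T) x y :
  P x -> (forall a b, P a -> e a b -> P b && e' a b) -> connect e x y -> connect e' x y.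
Proof.
move=> Px H /connectP [s]; elim: s x Px => [|z s IH] x Px /=; first by move=> _ ->.
case/andP => exz pz ey; case/andP: (H _ _ Px exz) => Pz e'xz.
exact: connect_trans (connect1 e'xz) (IH _ Pz pz ey).
Qed.

Lemma connect_inv (T : finType) (e : rel T) (P : pred T) x y :
  P x -> (forall a b, P a -> e a b -> P b) -> connect e x y -> P y.
Proof.
move=> Px H /connectP [s]; elim: s x Px => [|z s IH] x Px /=; first by move=> _ ->.
case/andP => exz pz ey; exact: IH _ (H _ _ Px exz) pz ey.
Qed.

Definition lvl n (D : {set node n}) (eps : node n -> int) (c : int) : {set node n} :=
  [set x in D | eps x == c].

Arguments lvl {n}.

Lemma in_lvl n (D : {set node n}) eps c x : (x \in lvl D eps c) = (x \in D) && (eps x == c).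
Proof. by rewrite inE. Qed.

Section Main.
Local Open Scope ring_scope.

Lemma pm1 (z : int) : `|z|%N = 1%N -> z = 1 \/ z = -1.
Proof. by case: z => [[|[|k]]|[|k]] //= _; [left|right]. Qed.

Lemma main_aux (R : realFieldType) (n : nat) (hn : (1 <= n)%N)
  (D : {set node n}) (hD : ordinary D) (eps : node n -> int)
  (heps : edge_direction R D eps) :
  exists D1 D2 : {set node n},
    [/\ ordinary D1, ordinary D2, D1 :&: D2 = set0 & D1 :|: D2 = D] /\
    [/\ (forall t, is_top D t -> t \in D1),
        (forall u, u \in D1 -> eps u = 0%R)
      & exists c : int, (c = 1%R \/ c = (-1)%R) /\
          (forall u, u \in D2 -> eps u = c)].
Proof.
case: heps => hprim [F [[a [ha hF]] Feps Fline]].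
pose er := fun u => (eps u)%:~R : R.
have [Ceps aeps] : coneC D er /\ \sum_u a u * er u = 0 := (hF er).1 Feps.
case: (Ceps) => C0 Ctop Cle1 Cle2.
have erE : forall u v, (er u <= er v) = (eps u <= eps v) by move=> u v; rewrite /er ler_int.
have er0 : forall u, (er u == 0) = (eps u == 0) by move=> u; rewrite /er intr_eq0.
have decomp : forall g : node n -> R,
   coneC D (fun u => er u + 1 * g u) -> coneC D (fun u => er u + (-1) * g u) ->
   exists t : R, forall u, er u + 1 * g u = t * er u.
  move=> g C1 C2; apply: Fline; apply/hF; split=> //.
  have h1 := ha _ C1; have h2 := ha _ C2.
  have hs : \sum_u a u * (er u + 1 * g u) + \sum_u a u * (er u + (-1) * g u) = 0.
    rewrite -big_split /= (eq_bigr (fun u => 2 * (a u * er u))); last by move=> u _; ring.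
    by rewrite -mulr_sumr aeps mulr0.
  lra.
pose E := [rel x y | [&& x \in D, y \in D, adjT x y & eps x == eps y]].
have Esym : symmetric E by move=> x y; rewrite /= adjT_sym eq_sym andbCA.
have Econn := sym_connect_sym Esym.
have Kprop : forall w v, w \in D -> connect E w v -> (v \in D) && (eps v == eps w).
  move=> w v wD; apply: (@connect_inv _ E (fun v => (v \in D) && (eps v == eps w))).
    by rewrite /= wD eqxx.
  by move=> x y /andP [_ /eqP hx] /and4P [_ -> _ /eqP <-]; rewrite hx eqxx.
have Kbound : forall w u v, u \in D -> v \in D -> adjT u v ->
    u \in [set x | connect E w x] -> v \notin [set x | connect E w x] -> eps u != eps v.
  move=> w u v uD vD auv; rewrite !inE => uK vK; apply/negP => /eqP euv.
  move/negP: vK; apply; apply: connect_trans uK (connect1 _).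
  by rewrite /= uD vD auv euv eqxx.
have pert : forall K : {set node n}, (forall t, is_top D t -> t \notin K) ->
     (forall u, u \in K -> u \in D) ->
     (forall u v, u \in D -> v \in D -> adjT u v -> u \in K -> v \notin K -> eps u != eps v) ->
     exists t : R, forall u, er u + 1 * (if u \in K then 1 else 0) = t * er u.
  move=> K Ktop KD Kb.
  have gen : forall d : R, -1 <= d -> d <= 1 ->
      coneC D (fun u => er u + d * (if u \in K then 1 else 0)).
    move=> d d1 d2.
    have step : forall u v, u \in D -> v \in D -> adjT u v -> er u <= er v ->
        er u + d * (if u \in K then 1 else 0) <= er v + d * (if v \in K then 1 else 0).
      move=> u v uD vD auv le.
      have lt1 : eps u != eps v -> er u + 1 <= er v.
        move=> ne; have : (eps u + 1 <= eps v)%R.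
          by move: le; rewrite erE lezD1 lt_neqAle ne.
        by rewrite -(ler_int R) intrD.
      case Hu: (u \in K); case Hv: (v \in K); rewrite ?mulr1 ?mulr0 ?addr0.
      - by rewrite lerD2r.
      - have := lt1 (Kb u v uD vD auv Hu (negbT Hv)); lra.
      - have := Kb v u vD uD (etrans (adjT_sym v u) auv) Hv (negbT Hu).
        rewrite eq_sym => /lt1; lra.
      - exact: le.
    split.
    - move=> u uD; have nK : u \notin K by apply: contra uD; exact: KD.
      by rewrite C0 // (negbTE nK) mulr0 addr0.
    - by move=> t ht; rewrite Ctop // (negbTE (Ktop t ht)) mulr0 addr0.
    - move=> u v uD vD hr hc; apply: step => //; last exact: Cle1.
      by apply: adj_down => //; left.
    - move=> u v uD vD hr hc; apply: step => //; last exact: Cle2.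
      by rewrite adjT_sym; apply: adj_down => //; right.
  apply: (decomp (fun u => if u \in K then 1 else 0)); apply: gen; lra.
have [u0 u0D] : exists u0, u0 \in D by move: hD.1.1 => /set0Pn.
pose t0 := [arg min_(u < u0 in D) row u].
have t0top : is_top D t0.
  rewrite /t0; case: arg_minnP => // t tD tmin; split=> //.
have eps_top : forall t, is_top D t -> eps t = 0.
  by move=> t ht; apply/eqP; rewrite -er0; apply/eqP; exact: Ctop.
have [w0 hw0] : exists w0, eps w0 != 0.
  case: (pickP (fun u => eps u != 0)) => [w hw | H]; first by exists w.
  exfalso.
  have hd : forall u, (0%N%:Z %| eps u)%Z.
    by move=> u; move: (H u) => /= /negbFE /eqP ->; exact: dvdz0.
  by have := hprim 0%N hd.
have w0D : w0 \in D.
  apply: contraT => nD; move: hw0; by rewrite -er0 (C0 _ nD) eqxx.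
pose K := [set x | connect E w0 x].
have KD : forall v, v \in K -> (v \in D) && (eps v == eps w0).
  by move=> v; rewrite inE; exact: Kprop.
have [|||t Ht] := pert K.
- move=> t ht; apply/negP => /KD /andP [_ /eqP]; rewrite eps_top // => h.
  by move: hw0; rewrite -h eqxx.
- by move=> u /KD /andP [].
- by move=> u v uD vD auv; exact: Kbound.
have w0K : w0 \in K by rewrite inE connect0.
have Hval : forall u, u \notin K -> eps u = 0.
  move=> u uK; have h2 := Ht u; have h1 := Ht w0.
  rewrite (negbTE uK) in h2; rewrite w0K in h1.
  have t1 : t != 1.
    by apply/eqP => T1; rewrite T1 in h1; lra.
  have : (t - 1) * er u = 0 by rewrite mulrBl mul1r -h2 mulr0 addr0 subrr.
  move/eqP; rewrite mulf_eq0 subr_eq0 (negbTE t1) /= er0 => /eqP //.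
have Kchar : forall u, u \in D -> (u \in K) = (eps u == eps w0).
  move=> u uD; case uK: (u \in K).
    by case/andP: (KD u uK) => _ ->.
  by rewrite (Hval u (negbT uK)) eq_sym (negbTE hw0).
have absc : `|eps w0|%N = 1%N.
  apply: hprim => u; case uK: (u \in K).
    case/andP: (KD u uK) => _ /eqP ->.
    by rewrite /dvdz absz_nat unfold_in dvdnn.
  by rewrite (Hval u (negbT uK)) dvdz0.
have sand : forall c' : int, forall u v, u \in lvl D eps c' -> v \in lvl D eps c' ->
   row v = row u -> col v = (col u).+1 ->
   [/\ (0 < row u)%N, inD (lvl D eps c') (row u).-1 (col u).+1
     & inD (lvl D eps c') (row u).+1 (col u)].
  move=> c' u v; rewrite !in_lvl => /andP [uD /eqP hu] /andP [vD /eqP hv] hr hcol.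
  have [H0 /existsP [p /andP [pD /andP [/eqP pr /eqP pc]]]
        /existsP [q /andP [qD /andP [/eqP qr /eqP qc]]]] := hD.2 u v uD vD hr hcol.
  have rp : row u = (row p).+1 by rewrite pr prednK.
  have e1 : er p <= er u := Cle2 u p uD pD rp pc.
  have e2 : er v <= er p.
    by apply: Cle1 => //; [rewrite hr | rewrite pc hcol].
  have e3 : er q <= er u.
    by apply: Cle1 => //; rewrite qc.
  have e4 : er v <= er q.
    by apply: Cle2 => //; [rewrite qr hr | rewrite hcol qc].
  rewrite !erE hu hv in e1 e2 e3 e4.
  have ep : eps p = c' by apply/le_anti; rewrite e1 e2.
  have eq : eps q = c' by apply/le_anti; rewrite e3 e4.
  split=> //; apply/existsP; [exists p | exists q];
    by rewrite in_lvl ?pD ?qD ?ep ?eq ?pr ?pc ?qr ?qc !eqxx.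
have connS : forall c' v1 v2, v1 \in lvl D eps c' -> connect E v1 v2 ->
    connect [rel x y | [&& x \in lvl D eps c', y \in lvl D eps c' & adjT x y]] v1 v2.
  move=> c' v1 v2 h1; apply: (@connect_mono _ E _ (fun x => x \in lvl D eps c')) => //.
  move=> x y; rewrite /= !in_lvl => /andP [xD /eqP hx] /and4P [_ yD axy /eqP exy].
  by rewrite xD yD -exy hx eqxx axy.
have ordS : forall c', (exists u, u \in lvl D eps c') ->
   (forall v1 v2, v1 \in lvl D eps c' -> v2 \in lvl D eps c' -> connect E v1 v2) ->
   ordinary (lvl D eps c').
  move=> c' [u hu] hconn; split; [split|].
  - by apply/set0Pn; exists u.
  - by move=> v1 v2 h1 h2; apply: connS h1 (hconn v1 v2 h1 h2).
  - exact: sand.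
have toTop : forall v, v \in D -> eps v = 0 -> connect E v t0.
  move=> v vD ev; case: (boolP (t0 \in [set x | connect E v x])) => [|nt].
    by rewrite inE.
  exfalso; have [|||t' Ht'] := pert [set x | connect E v x].
  - by move=> t1 ht; rewrite (top_unique hD ht t0top).
  - by move=> u; rewrite inE => /(Kprop v u vD) /andP [].
  - by move=> u w uD wD auw; exact: Kbound.
  have := Ht' v; rewrite inE connect0.
  have -> : er v = 0 by apply/eqP; rewrite er0 ev.
  by rewrite mulr0 add0r mulr1 => /eqP; rewrite oner_eq0.
exists (lvl D eps 0), (lvl D eps (eps w0)); split; split.
- apply: ordS; first by exists t0; rewrite in_lvl t0top.1 eps_top.
  move=> v1 v2; rewrite !in_lvl => /andP [v1D /eqP e1] /andP [v2D /eqP e2].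
  by apply: connect_trans (toTop v1 v1D e1) _; rewrite Econn; exact: toTop.
- apply: ordS; first by exists w0; rewrite in_lvl w0D eqxx.
  move=> v1 v2; rewrite !in_lvl => /andP [v1D e1] /andP [v2D e2].
  rewrite -Kchar // inE in e1; rewrite -Kchar // inE in e2.
  by apply: connect_trans e2; rewrite Econn.
- apply/setP => u; rewrite inE !in_lvl in_set0.
  case: (u \in D) => //=; apply/negP => /andP [/eqP -> ].
  by rewrite eq_sym (negbTE hw0).
- apply/setP => u; rewrite inE !in_lvl.
  case uD: (u \in D) => //=; rewrite -Kchar //.
  by case uK: (u \in K); rewrite ?orbT // Hval ?uK ?eqxx.
- by move=> t1 ht; rewrite in_lvl ht.1 eps_top.
- by move=> u; rewrite in_lvl => /andP [_ /eqP].
- exists (eps w0); split; first exact: pm1.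
  by move=> u; rewrite in_lvl => /andP [_ /eqP].
Qed.
End Main.

Theorem mainTheorem6 (R : realFieldType) (n : nat) (hn : (1 <= n)%N)
  (D : {set node n}) (hD : ordinary D) (eps : node n -> int)
  (heps : edge_direction R D eps) :
  exists D1 D2 : {set node n},
    [/\ ordinary D1, ordinary D2, D1 :&: D2 = set0 & D1 :|: D2 = D] /\
    [/\ (forall t, is_top D t -> t \in D1),
        (forall u, u \in D1 -> eps u = 0%R)
      & exists c : int, (c = 1%R \/ c = (-1)%R) /\
          (forall u, u \in D2 -> eps u = c)].
Proof. exact: (@main_aux R n hn D hD eps heps). Qed.
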